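(* Let $S$ be a formula such that $F_n(u,v)\in S$ for all $u,v\in S$ and $n\ge0$. Then $\mathbb{C}[D]\otimes S$, with the extended products and the operator $D$, is a vertex Lie superalgebra if and only if $F_n=0$ for all $n\ge1$ and $F_0:S\otimes S\to S$ is the bracket of a Lie superalgebra structure on $S$.
   Context: All spaces over $\mathbb{C}$; $\mathbb{N}=\{0,1,2,\dots\}$; $\varepsilon_{u,v}=(-1)^{|u||v|}$. A formula is a $\mathbb{Z}_2$-graded space $S$ with parity-preserving linear maps $F_n:S\otimes S\to\mathbb{C}[D]\otimes S$ ($n\in\mathbb{N}$; $\mathbb{C}[D]$, formal polynomials in $D$, is even) with $F_n(u,v)=0$ for $n$ large; write $u_nv=F_n(u,v)$, identify $S=1\otimes S$, and let $D(D^k\otimes u)=D^{k+1}\otimes u$. The products extend uniquely to bilinear products $A_nB$ ($n\in\mathbb{N}$) on $\mathbb{C}[D]\otimes S$ with $(DA)_nB=-nA_{n-1}B$ and $D(A_nB)=(DA)_nB+A_n(DB)$; explicitly $\sum_{n\ge0}(P(D)u)_n(Q(D)v)z^{-n-1}=P(\frac{d}{dz})Q(D-\frac{d}{dz})\sum_{n\ge0}(u_nv)z^{-n-1}$ for $u,v\in S$ and polynomials $P,Q$. A vertex Lie superalgebra is a $\mathbb{Z}_2$-graded space $U$ with an even operator $D$ and bilinear products $u_nv$ ($n\in\mathbb{N}$) such that for homogeneous $u,v,w$: $u_nv=0$ for $n$ large; $|u_nv|=|u|+|v|$; $(Du)_nv=-nu_{n-1}v$ (read as $0$ for $n=0$)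 and $D(u_nv)=(Du)_nv+u_n(Dv)$; $u_nv=-\varepsilon_{u,v}\sum_{k\ge0}(-1)^{n+k}\frac{D^k}{k!}v_{n+k}u$; and for all $k,m,n\in\mathbb{N}$, $\sum_{i\ge0}(-1)^i\binom{k}{i}(u_{m+k-i}(v_{n+i}w)-\varepsilon_{u,v}(-1)^kv_{n+k-i}(u_{m+i}w))=\sum_{i\ge0}\binom{m}{i}(u_{k+i}v)_{m+n-i}w$. *)

(* Defs.v *)
From HB Require Import structures.
From mathcomp Require Import all_boot all_algebra.
From mathcomp Require Import boolp reals complex.

Set Implicit Arguments.
Unset Strict Implicit.
Unset Printing Implicit Defensive.

Import GRing.Theory.
Local Open Scope ring_scope.

(* Z2-graded spaces.  A Z2-graded space is modelled as V0 * V1 (even   *)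
(* (false = even, true = odd).                                         *)

Definition homog (C : pzRingType) (V0 V1 : lmodType C) (b : bool)
  (x : V0 * V1) : Prop :=
  if b then x.1 = 0 else x.2 = 0.

Definition eps (C : pzRingType) (bu bv : bool) : C := (-1) ^+ (bu && bv).

Definition is_LieSuperalgebra (C : pzRingType) (S0 S1 : lmodType C)
  (br : S0 * S1 -> S0 * S1 -> S0 * S1) : Prop :=
  (forall (a : C) (x y z : S0 * S1), br (a *: x + y) z = a *: br x z + br y z)
  /\ (forall (a : C) (x y z : S0 * S1), br z (a *: x + y) = a *: br z x + br z y)
  /\ (forall bu bv (u v : S0 * S1), homog bu u -> homog bv v ->
        homog (bu (+) bv) (br u v))
  /\ (forall bu bv (u v : S0 * S1), homog bu u -> homog bv v ->
        br u v = - (eps C bu bv *: br v u))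
  /\ (forall bu bv bw (u v w : S0 * S1), homog bu u -> homog bv v -> homog bw w ->
        br u (br v w) = br (br u v) w + eps C bu bv *: br v (br u w)).

Definition is_VLSA (C : fieldType) (U0 U1 : lmodType C)
  (D : U0 * U1 -> U0 * U1) (prod : nat -> U0 * U1 -> U0 * U1 -> U0 * U1) : Prop :=
  (forall (a : C) (x y : U0 * U1), D (a *: x + y) = a *: D x + D y)
  /\ (forall b (x : U0 * U1), homog b x -> homog b (D x))
  /\ (forall n (a : C) (x y z : U0 * U1),
        prod n (a *: x + y) z = a *: prod n x z + prod n y z)
  /\ (forall n (a : C) (x y z : U0 * U1),
        prod n z (a *: x + y) = a *: prod n z x + prod n z y)
  /\ (forall bu bv (u v : U0 * U1), homog bu u -> homog bv v ->
        exists N, forall n, (N <= n)%N -> prod n u v = 0)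
  /\ (forall bu bv (u v : U0 * U1) n, homog bu u -> homog bv v ->
        homog (bu (+) bv) (prod n u v))
  /\ (forall bu bv (u v : U0 * U1) n, homog bu u -> homog bv v ->
        prod n (D u) v = - (n%:R *: prod n.-1 u v))
  /\ (forall bu bv (u v : U0 * U1) n, homog bu u -> homog bv v ->
        D (prod n u v) = prod n (D u) v + prod n u (D v))
  (* skew-symmetry; the (finite) sum over k >= 0 is truncated at any M
     beyond which all v_m u vanish *)
  /\ (forall bu bv (u v : U0 * U1) n M, homog bu u -> homog bv v ->
        (forall m, (M <= m)%N -> prod m v u = 0) ->
        prod n u v = - (eps C bu bv *:
          \sum_(k < M) (((-1) ^+ (n + k)%N * (k`!%:R)^-1) *: iter k D (prod (n + k)%N v u))))
  (* Borcherds-type identity; binomial coefficients vanish for i > k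
     (left) and i > m (right), so the sums are finite *)
  /\ (forall bu bv bw (u v w : U0 * U1) k m n,
        homog bu u -> homog bv v -> homog bw w ->
        \sum_(i < k.+1) ((-1) ^+ i * ('C(k, i))%:R) *:
            (prod (m + k - i)%N u (prod (n + i)%N v w)
             - eps C bu bv *: ((-1) ^+ k *: prod (n + k - i)%N v (prod (m + i)%N u w)))
        = \sum_(i < m.+1) ('C(m, i))%:R *: prod (m + n - i)%N (prod (k + i)%N u v) w).

(* C[D] (x) V : finitely supported coefficient sequences               *)
(*   f = sum_k D^k (x) f k.                                            *)
Definition finsupp (V : nmodType) (f : nat -> V) : Prop :=
  exists N, forall k, (N <= k)%N -> f k = 0.

Definition CD (C : pzRingType) (V : lmodType C) : Type :=
  {f : nat -> V | finsupp f}.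

HB.instance Definition _ (C : pzRingType) (V : lmodType C) :=
  gen_eqMixin (CD V).
HB.instance Definition _ (C : pzRingType) (V : lmodType C) :=
  gen_choiceMixin (CD V).

Lemma CD_ext (C : pzRingType) (V : lmodType C) (f g : CD V) :
  (forall k, sval f k = sval g k) -> f = g.
Proof.
case: f g => [f pf] [g pg] /= efg.
have e : f = g by apply: funext.
subst g; congr exist; exact: Prop_irrelevance.
Qed.

Lemma finsupp0 (V : nmodType) : finsupp (fun _ : nat => (0 : V)).
Proof. by exists 0%N. Qed.

Lemma finsuppD (V : nmodType) (f g : nat -> V) :
  finsupp f -> finsupp g -> finsupp (fun k => f k + g k).
Proof.
move=> [N hN] [M hM]; exists (maxn N M) => k hk.
rewrite hN ?hM ?addr0 //; apply: leq_trans hk;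
  [exact: leq_maxr | exact: leq_maxl].
Qed.

Lemma finsuppN (V : zmodType) (f : nat -> V) :
  finsupp f -> finsupp (fun k => - f k).
Proof. by move=> [N hN]; exists N => k hk; rewrite hN ?oppr0. Qed.

Lemma finsuppZ (C : pzRingType) (V : lmodType C) (a : C) (f : nat -> V) :
  finsupp f -> finsupp (fun k => a *: f k).
Proof. by move=> [N hN]; exists N => k hk; rewrite hN ?scaler0. Qed.

Definition CD_zero (C : pzRingType) (V : lmodType C) : CD V :=
  exist _ _ (@finsupp0 V).
Definition CD_add (C : pzRingType) (V : lmodType C) (f g : CD V) : CD V :=
  exist _ _ (finsuppD (proj2_sig f) (proj2_sig g)).
Definition CD_opp (C : pzRingType) (V : lmodType C) (f : CD V) : CD V :=
  exist _ _ (finsuppN (proj2_sig f)).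
Definition CD_scale (C : pzRingType) (V : lmodType C) (a : C) (f : CD V) : CD V :=
  exist _ _ (finsuppZ a (proj2_sig f)).

Lemma CD_addA (C : pzRingType) (V : lmodType C) : associative (@CD_add C V).
Proof. by move=> f g h; apply: CD_ext => k /=; rewrite addrA. Qed.
Lemma CD_addC (C : pzRingType) (V : lmodType C) : commutative (@CD_add C V).
Proof. by move=> f g; apply: CD_ext => k /=; rewrite addrC. Qed.
Lemma CD_add0 (C : pzRingType) (V : lmodType C) :
  left_id (@CD_zero C V) (@CD_add C V).
Proof. by move=> f; apply: CD_ext => k /=; rewrite add0r. Qed.
Lemma CD_addN (C : pzRingType) (V : lmodType C) :
  left_inverse (@CD_zero C V) (@CD_opp C V) (@CD_add C V).
Proof. by move=> f; apply: CD_ext => k /=; rewrite addNr. Qed.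

HB.instance Definition _ (C : pzRingType) (V : lmodType C) :=
  GRing.isZmodule.Build (CD V) (@CD_addA C V) (@CD_addC C V)
    (@CD_add0 C V) (@CD_addN C V).

Lemma CD_scaleA (C : pzRingType) (V : lmodType C) (a b : C) (f : CD V) :
  CD_scale a (CD_scale b f) = CD_scale (a * b) f.
Proof. by apply: CD_ext => k /=; rewrite scalerA. Qed.
Lemma CD_scale1 (C : pzRingType) (V : lmodType C) :
  left_id 1 (@CD_scale C V).
Proof. by move=> f; apply: CD_ext => k /=; rewrite scale1r. Qed.
Lemma CD_scaleDr (C : pzRingType) (V : lmodType C) :
  right_distributive (@CD_scale C V) +%R.
Proof. by move=> a f g; apply: CD_ext => k /=; rewrite scalerDr. Qed.
Lemma CD_scaleDl (C : pzRingType) (V : lmodType C) (f : CD V) :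
  {morph (@CD_scale C V)^~ f : a b / a + b}.
Proof. by move=> a b; apply: CD_ext => k /=; rewrite scalerDl. Qed.

HB.instance Definition _ (C : pzRingType) (V : lmodType C) :=
  GRing.Zmodule_isLmodule.Build C (CD V) (@CD_scaleA C V) (@CD_scale1 C V)
    (@CD_scaleDr C V) (@CD_scaleDl C V).

Definition CDcoef (C : pzRingType) (V : lmodType C) (f : CD V) (k : nat) : V :=
  sval f k.

Definition CDbound (C : pzRingType) (V : lmodType C) (f : CD V) : nat :=
  projT1 (cid (proj2_sig f)).

(* the operator D : D^k (x) v |-> D^{k+1} (x) v *)
Lemma finsupp_shift (V : nmodType) (f : nat -> V) :
  finsupp f -> finsupp (fun k => if k is k'.+1 then f k' else 0).
Proof. by move=> [N hN]; exists N.+1 => -[|k] //= hk; apply: hN. Qed.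

Definition CDshift (C : pzRingType) (V : lmodType C) (f : CD V) : CD V :=
  exist _ _ (finsupp_shift (proj2_sig f)).

(* the identification S = 1 (x) S *)
Lemma finsupp_emb (V : nmodType) (v : V) :
  finsupp (fun k : nat => if k is 0%N then v else 0).
Proof. by exists 1%N => -[|k]. Qed.

Definition CDemb (C : pzRingType) (V : lmodType C) (v : V) : CD V :=
  exist _ _ (finsupp_emb v).

Definition CDS (C : pzRingType) (S0 S1 : lmodType C) : Type :=
  (CD S0 * CD S1)%type.

Definition Dop (C : pzRingType) (S0 S1 : lmodType C) (A : CD S0 * CD S1) :
  CD S0 * CD S1 := (CDshift A.1, CDshift A.2).

Definition embS (C : pzRingType) (S0 S1 : lmodType C) (s : S0 * S1) :
  CD S0 * CD S1 := (CDemb s.1, CDemb s.2).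

Definition coefS (C : pzRingType) (S0 S1 : lmodType C) (A : CD S0 * CD S1)
  (k : nat) : S0 * S1 := (CDcoef A.1 k, CDcoef A.2 k).

Definition boundS (C : pzRingType) (S0 S1 : lmodType C) (A : CD S0 * CD S1) :
  nat := maxn (CDbound A.1) (CDbound A.2).

Definition is_formula (C : pzRingType) (S0 S1 : lmodType C)
  (F : nat -> S0 * S1 -> S0 * S1 -> CD S0 * CD S1) : Prop :=
  (forall n (a : C) (x y z : S0 * S1), F n (a *: x + y) z = a *: F n x z + F n y z)
  /\ (forall n (a : C) (x y z : S0 * S1), F n z (a *: x + y) = a *: F n z x + F n z y)
  /\ (forall n bu bv (u v : S0 * S1), homog bu u -> homog bv v ->
        homog (bu (+) bv) (F n u v))
  /\ (forall u v : S0 * S1, exists N, forall n, (N <= n)%N -> F n u v = 0).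

(* The extended products on C[D] (x) S, via the explicit formula
     (D^i u)_n (D^j v)
       = (-1)^i sum_{l=0}^{j} C(j,l) n(n-1)...(n-i-l+1) D^{j-l} F_{n-i-l}(u,v),
   which is the coefficient of z^{-n-1} in
     (d/dz)^i (D - d/dz)^j sum_n F_n(u,v) z^{-n-1},
   extended bilinearly:  A_n B = sum_{i,j} (D^i a_i)_n (D^j b_j). *)
Definition ext_prod (C : pzRingType) (S0 S1 : lmodType C)
  (F : nat -> S0 * S1 -> S0 * S1 -> CD S0 * CD S1) (n : nat)
  (A B : CD S0 * CD S1) : CD S0 * CD S1 :=
  \sum_(i < boundS A) \sum_(j < boundS B)
    ((-1) ^+ i : C) *: \sum_(l < j.+1)
       (('C(j, l) * n ^_ (i + l))%N%:R : C) *: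
         iter (j - l) (@Dop C S0 S1) (F (n - i - l)%N (coefS A i) (coefS B j)).

(* Main.v *)
Require Import Defs.
From HB Require Import structures.
From mathcomp Require Import all_boot all_algebra.
From mathcomp Require Import boolp reals complex.
From mathcomp Require Import zify.
Import GRing.Theory Num.Theory.
Local Open Scope ring_scope.

Set Implicit Arguments.
Unset Strict Implicit.
Unset Printing Implicit Defensive.


Definition islin (C : pzRingType) (V W : lmodType C) (f : V -> W) :=
  forall a x y, f (a *: x + y) = a *: f x + f y.

Section Lin.
Variables (C : comPzRingType) (V W X : lmodType C).

Lemma lin0 (f : V -> W) : islin f -> f 0 = 0.
Proof.
move=> h; have := h 1 0 0; rewrite scaler0 addr0 scale1r => e.
by apply: (addrI (f 0)); rewrite addr0 -e.
Qed.

Lemma linD (f : V -> W) : islin f -> forall x y, f (x + y) = f x + f y.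
Proof. by move=> h x y; have := h 1 x y; rewrite !scale1r. Qed.

Lemma linZ (f : V -> W) : islin f -> forall a x, f (a *: x) = a *: f x.
Proof. by move=> h a x; rewrite -[a *: x]addr0 h lin0 // addr0. Qed.

Lemma linN (f : V -> W) : islin f -> forall x, f (- x) = - f x.
Proof. by move=> h x; rewrite -scaleN1r linZ // scaleN1r. Qed.

Lemma linB (f : V -> W) : islin f -> forall x y, f (x - y) = f x - f y.
Proof. by move=> h x y; rewrite linD // linN. Qed.

Lemma lin_sum (f : V -> W) : islin f -> forall n (g : 'I_n -> V),
  f (\sum_(i < n) g i) = \sum_(i < n) f (g i).
Proof. by move=> h n g; apply: (big_morph f (linD h) (lin0 h)). Qed.

Lemma islin_comp (f : W -> X) (g : V -> W) : islin f -> islin g -> islin (fun x => f (g x)).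
Proof. by move=> hf hg a x y; rewrite hg hf. Qed.

Lemma islin_scale (c : C) (f : V -> W) : islin f -> islin (fun x => c *: f x).
Proof.
by move=> hf a x y; rewrite hf scalerDr !scalerA [c * a]mulrC.
Qed.

Lemma islin_sum n (f : 'I_n -> V -> W) : (forall i, islin (f i)) ->
  islin (fun x => \sum_(i < n) f i x).
Proof.
move=> hf a x y; rewrite scaler_sumr -big_split /=.
by apply: eq_bigr => i _; rewrite hf.
Qed.

Lemma islin_iter (f : V -> V) : islin f -> forall k, islin (iter k f).
Proof. by move=> hf; elim=> [|k IH] a x y //=; rewrite IH hf. Qed.

End Lin.

Lemma sum_tr (V : nmodType) (g : nat -> V) K N :
  (forall k, (K <= k)%N -> g k = 0) -> (K <= N)%N ->
  \sum_(k < N) g k = \sum_(k < K) g k.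
Proof.
move=> hg hKN; rewrite -(subnKC hKN) big_split_ord /= [X in _ + X]big1 ?addr0 // => k _.
by apply: hg; rewrite leq_addr.
Qed.
Section Alg.
Variables (C : comPzRingType) (U : lmodType C).
Lemma alg1 (a b : U) (c e : C) : -(c *: a) - e *: -(c *: b) = -(c *: (a - e *: b)).
Proof. by rewrite scalerN opprK scalerBr opprB !scalerA mulrC addrC. Qed.
Lemma alg2 (x y a1 a2 b1 b2 : U) (m n e : C) :
  (x + m *: a1 + n *: a2) - e *: (y + n *: b2 + m *: b1)
  = (x - e *: y) + m *: (a1 - e *: b1) + n *: (a2 - e *: b2).
Proof.
rewrite !scalerDr !scalerN !scalerA [e * m]mulrC [e * n]mulrC -!scalerA.
rewrite !opprD -!addrA; congr (x + _).
set A := m *: a1; set B := n *: a2; set Y := - (e *: y); set N2 := - (n *: (e *: b2)); set M1 := - (m *: (e *: b1)).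
rewrite [B + _]addrCA [A + _]addrCA; congr (Y + (A + _)).
by rewrite addrA addrC.
Qed.
Lemma alg3 (a1 a2 b1 b2 : U) (e : C) :
  (a1 + a2) - e *: (b1 + b2) = (a1 - e *: b1) + (a2 - e *: b2).
Proof. by rewrite scalerDr opprD addrACA. Qed.
Lemma alg4 (a b c d : U) (s : C) : a - b - (- s) *: (c - d) = (a - s *: d) - (b - s *: c).
Proof. rewrite scaleNr opprK scalerBr !opprB -!addrA; congr (a + _); rewrite addrCA [RHS]addrCA; congr (_ + _); exact: addrC. Qed.
End Alg.


Section Abstract.
Variable C : numFieldType.
Variable U : lmodType C.
Variable D : U -> U.
Variable prod : nat -> U -> U -> U.
Hypothesis hD : islin D.
Hypothesis hpl : forall n z, islin (fun x => prod n x z).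
Hypothesis hpr : forall n z, islin (prod n z).
Hypothesis hDp : forall u v n, prod n (D u) v = - (n%:R *: prod n.-1 u v).
Hypothesis hDd : forall u v n, D (prod n u v) = prod n (D u) v + prod n u (D v).
Hypothesis hvan : forall u v, exists N, forall n, (N <= n)%N -> prod n u v = 0.

Lemma hDr u v n : prod n u (D v) = D (prod n u v) + n%:R *: prod n.-1 u v.
Proof. by rewrite hDd hDp addrAC addNr add0r. Qed.

Lemma hiter k : islin (iter k D).
Proof. exact: islin_iter. Qed.

Definition cc n k : C := (-1) ^+ (n + k)%N * (k`!%:R)^-1.

Definition Sk u v n M :=
  \sum_(k < M) (((-1) ^+ (n + k)%N * (k`!%:R)^-1) *: iter k D (prod (n + k)%N v u)).

Definition SKL e u v := exists M0, forall n M, (M0 <= M)%N ->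
  prod n u v = - (e *: Sk u v n M).

Lemma cc_S n k : cc n k.+1 * k.+1%:R = - cc n k.
Proof.
rewrite /cc addnS exprS factS natrM invfM mulN1r !mulNr -!mulrA; congr (- (_ * _)).
by rewrite mulrCA mulVf ?mulr1 // pnatr_eq0.
Qed.

Lemma cc_P n k : (0 < n)%N -> cc n k = - cc n.-1 k.
Proof.
by case: n => // n _; rewrite /cc addSn exprS mulN1r mulNr.
Qed.

Lemma TL (f : nat -> U) n M :
  \sum_(k < M.+1) cc n k *: iter k.+1 D (f k)
  + \sum_(k < M.+1) (cc n k * k%:R) *: iter k D (f k.-1)
  = cc n M *: iter M.+1 D (f M).
Proof.
rewrite [X in _ + X]big_ord_recl /= mulr0 scale0r add0r big_ord_recr /=.
rewrite -addrA addrC -addrA [X in _ + X]addrC.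
have -> : \sum_(i < M) (cc n (lift ord0 i) * (lift ord0 i)%:R) *: iter (lift ord0 i) D (f (lift ord0 i).-1)
  = - \sum_(i < M) cc n i *: iter i.+1 D (f i).
  by rewrite -sumrN; apply: eq_bigr => i _ /=; rewrite cc_S scaleNr.
by rewrite subrr addr0.
Qed.

Lemma partA n M v u :
  \sum_(k < M) (cc n k * n%:R) *: iter k D (prod (n + k).-1 v u)
  = - (n%:R *: Sk u v n.-1 M).
Proof.
case: n => [|n].
  by rewrite scale0r oppr0 big1 // => k _; rewrite mulr0 scale0r.
rewrite /Sk scaler_sumr -sumrN; apply: eq_bigr => k _.
rewrite scalerA -scaleNr; congr (_ *: _).
by rewrite (@cc_P n.+1 k (ltn0Sn n)) /cc /= mulNr mulrC.
Qed.

Lemma partB n M v u : prod (n + M) v u = 0 ->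
  \sum_(k < M.+1) cc n k *: iter k.+1 D (prod (n + k) v u)
  + \sum_(k < M.+1) (cc n k * k%:R) *: iter k D (prod (n + k).-1 v u) = 0.
Proof.
move=> h.
have -> : \sum_(k < M.+1) (cc n k * k%:R) *: iter k D (prod (n + k).-1 v u)
   = \sum_(k < M.+1) (cc n k * k%:R) *: iter k D ((fun j => prod (n + j) v u) (k.-1)).
  apply: eq_bigr => -[[|k] hk] _ /=; first by rewrite mulr0 !scale0r.
  by rewrite addnS.
by rewrite (TL (fun j => prod (n + j) v u)) h lin0 ?scaler0 //; apply: hiter.
Qed.

Lemma SKL_Du e u v : SKL e u v -> SKL e (D u) v.
Proof.
case=> M0 H; have [N HN] := hvan v u.
exists (maxn M0 N).+1 => n M; case: M => [//|M'] HM.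
have HM0 : (M0 <= M'.+1)%N by lia.
have HN' : (N <= n + M')%N by lia.
rewrite hDp (H _ _ HM0).
suff -> : Sk (D u) v n M'.+1 = - (n%:R *: Sk u v n.-1 M'.+1).
  by rewrite !scalerN !opprK !scalerA mulrC.
have E : Sk (D u) v n M'.+1 =
   (\sum_(k < M'.+1) cc n k *: iter k.+1 D (prod (n + k) v u)
  + \sum_(k < M'.+1) (cc n k * k%:R) *: iter k D (prod (n + k).-1 v u))
  + \sum_(k < M'.+1) (cc n k * n%:R) *: iter k D (prod (n + k).-1 v u).
  rewrite -!big_split /=; apply: eq_bigr => k _.
  rewrite hDr (linD (hiter k)) (linZ (hiter k)) -iterSr scalerDr scalerA -addrA -scalerDl -mulrDr -natrD [(k + n)%N]addnC.
  reflexivity.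
by rewrite E partB ?HN // add0r partA.
Qed.

Lemma SKL_Dv e u v : SKL e u v -> SKL e u (D v).
Proof.
case=> M0 H; have [N HN] := hvan v u.
exists (maxn M0 N).+1 => n M; case: M => [//|M'] HM.
have HM0 : (M0 <= M'.+1)%N by lia.
have HN' : (N <= n + M')%N by lia.
rewrite hDr (H _ _ HM0) (H _ _ HM0) (linN hD) (linZ hD).
have E : Sk u (D v) n M'.+1 =
  - ((\sum_(k < M'.+1) (cc n k * n%:R) *: iter k D (prod (n + k).-1 v u))
   + \sum_(k < M'.+1) (cc n k * k%:R) *: iter k D (prod (n + k).-1 v u)).
  rewrite -big_split -sumrN /=; apply: eq_bigr => k _.
  rewrite hDp (linN (hiter k)) (linZ (hiter k)) scalerN scalerA -scalerDl -mulrDr -natrD.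
  by [].
have E2 : D (Sk u v n M'.+1) = \sum_(k < M'.+1) cc n k *: iter k.+1 D (prod (n + k) v u).
  by rewrite /Sk (lin_sum hD); apply: eq_bigr => k _; rewrite (linZ hD).
have := @partB n M' v u (HN _ HN'); rewrite -E2 => /eqP; rewrite addr_eq0 => /eqP EB.
by rewrite E partA EB !scalerN !opprK scalerDr scalerN addrC !scalerA mulrC.
Qed.

Lemma SKL_add1 e u1 u2 v : SKL e u1 v -> SKL e u2 v -> SKL e (u1 + u2) v.
Proof.
case=> M1 H1 [M2 H2]; exists (maxn M1 M2) => n M HM.
rewrite (linD (hpl n v)) (H1 n M) ?(H2 n M); last 2 first.
- by apply: leq_trans HM; rewrite leq_maxr.
- by apply: leq_trans HM; rewrite leq_maxl.
rewrite -opprD -scalerDr /Sk -big_split /=; congr (- (_ *: _)); apply: eq_bigr => k _.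
by rewrite (linD (hpr _ _)) (linD (hiter k)) scalerDr.
Qed.

Lemma SKL_add2 e u v1 v2 : SKL e u v1 -> SKL e u v2 -> SKL e u (v1 + v2).
Proof.
case=> M1 H1 [M2 H2]; exists (maxn M1 M2) => n M HM.
rewrite (linD (hpr n u)) (H1 n M) ?(H2 n M); last 2 first.
- by apply: leq_trans HM; rewrite leq_maxr.
- by apply: leq_trans HM; rewrite leq_maxl.
rewrite -opprD -scalerDr /Sk -big_split /=; congr (- (_ *: _)); apply: eq_bigr => k _.
by rewrite (linD (hpl _ _)) (linD (hiter k)) scalerDr.
Qed.

Lemma SK_of_SKL e u v : SKL e u v -> forall n M,
  (forall m, (M <= m)%N -> prod m v u = 0) -> prod n u v = - (e *: Sk u v n M).
Proof.
case=> M0 H n M HM; rewrite (H n (maxn M0 M)) ?leq_maxl //; congr (- (_ *: _)).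
rewrite /Sk (sum_tr (g := fun k => ((-1) ^+ (n + k)%N * (k`!%:R)^-1) *: iter k D (prod (n + k)%N v u)) (K := M)) ?leq_maxr //.
move=> k hk; rewrite HM; last by apply: leq_trans hk (leq_addl _ _).
by rewrite lin0 ?scaler0 //; apply: hiter.
Qed.

End Abstract.


Section AbstractCF.
Variable C : numFieldType.
Variable U : lmodType C.
Variable D : U -> U.
Variable prod : nat -> U -> U -> U.
Hypothesis hD : islin D.
Hypothesis hpl : forall n z, islin (fun x => prod n x z).
Hypothesis hpr : forall n z, islin (prod n z).
Hypothesis hDp : forall u v n, prod n (D u) v = - (n%:R *: prod n.-1 u v).
Hypothesis hDd : forall u v n, D (prod n u v) = prod n (D u) v + prod n u (D v).


Lemma pl0 n z : prod n 0 z = 0. Proof. exact: (lin0 (hpl n z)). Qed.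
Lemma plD n z x y : prod n (x + y) z = prod n x z + prod n y z. Proof. exact: (linD (hpl n z)). Qed.
Lemma plZ n z a x : prod n (a *: x) z = a *: prod n x z. Proof. exact: (linZ (hpl n z)). Qed.
Lemma plN n z x : prod n (- x) z = - prod n x z. Proof. exact: (linN (hpl n z)). Qed.
Lemma pr0 n z : prod n z 0 = 0. Proof. exact: (lin0 (hpr n z)). Qed.
Lemma prD n z x y : prod n z (x + y) = prod n z x + prod n z y. Proof. exact: (linD (hpr n z)). Qed.
Lemma prZ n z a x : prod n z (a *: x) = a *: prod n z x. Proof. exact: (linZ (hpr n z)). Qed.
Lemma prN n z x : prod n z (- x) = - prod n z x. Proof. exact: (linN (hpr n z)). Qed.

Lemma hDr' u v n : prod n u (D v) = D (prod n u v) + n%:R *: prod n.-1 u v.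
Proof. by rewrite hDd hDp addrAC addNr add0r. Qed.

Variable e : C.

Definition Lf u v w m n := prod m u (prod n v w) - e *: prod n v (prod m u w).
Definition Rf u v w m n :=
  \sum_(i < m.+1) ('C(m, i))%:R *: prod (m + n - i)%N (prod i u v) w.
Definition CF u v w := forall m n, Lf u v w m n = Rf u v w m n.

Lemma Lf_Du u v w m n : Lf (D u) v w m n = - (m%:R *: Lf u v w m.-1 n).
Proof. by rewrite /Lf !hDp prN prZ alg1. Qed.

Lemma Lf_Dv u v w m n : Lf u (D v) w m n = - (n%:R *: Lf u v w m n.-1).
Proof. by rewrite /Lf !hDp prN prZ alg1. Qed.

Lemma Rf_Du u v w m n : Rf (D u) v w m n = - (m%:R *: Rf u v w m.-1 n).
Proof.
rewrite /Rf; case: m => [|m].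
  by rewrite big_ord1 hDp !scale0r !oppr0 pl0 scaler0.
rewrite big_ord_recl /= hDp scale0r oppr0 pl0 scaler0 add0r.
rewrite scaler_sumr -sumrN; apply: eq_bigr => j _ /=.
rewrite hDp plN plZ scalerN !scalerA.
have -> : (m.+1 + n - j.+1 = m + n - j)%N by lia.
by rewrite -!natrM mul_bin_diag mulnC.
Qed.

Lemma CF_Du u v w : CF u v w -> CF (D u) v w.
Proof. by move=> H m n; rewrite Lf_Du Rf_Du H. Qed.

Lemma RmS u v w m n : m%:R *: Rf u v w m.-1 n =
  \sum_(i < m.+1) ('C(m, i) * (m - i))%N%:R *: prod (m + n - i).-1 (prod i u v) w.
Proof.
rewrite /Rf; case: m => [|m].
  by rewrite scale0r big_ord1 /= muln0 scale0r.
rewrite [RHS]big_ord_recr /= subnn muln0 scale0r addr0 scaler_sumr.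
apply: eq_bigr => i _ /=; rewrite scalerA -natrM.
have hi := ltn_ord i.
have -> : (m + n - i = (m.+1 + n - i).-1)%N by lia.
by rewrite mul_bin_down mulnC.
Qed.

Lemma RnS u v w m n : n%:R *: Rf u v w m n.-1 =
  \sum_(i < m.+1) ('C(m, i) * n)%N%:R *: prod (m + n - i).-1 (prod i u v) w.
Proof.
rewrite /Rf; case: n => [|n].
  by rewrite scale0r big1 // => i _; rewrite muln0 scale0r.
rewrite scaler_sumr; apply: eq_bigr => i _; rewrite scalerA -natrM mulnC.
have hi := ltn_ord i.
by have -> : (m + n - i = (m + n.+1 - i).-1)%N by lia.
Qed.

Lemma SLm u v w m n :
  \sum_(i < m.+1) ('C(m, i) * i)%N%:R *: prod (m + n - i) (prod i.-1 u v) w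
  = \sum_(i < m.+1) ('C(m, i) * (m - i))%N%:R *: prod (m + n - i).-1 (prod i u v) w.
Proof.
case: m => [|m].
  by rewrite !big_ord1 /= !muln0 !scale0r.
rewrite big_ord_recl [RHS]big_ord_recr /= muln0 subnn muln0 !scale0r add0r addr0.
apply: eq_bigr => j _; rewrite /bump /=.
have hj := ltn_ord j.
have -> : (m.+1 + n - j.+1 = (m.+1 + n - j).-1)%N by lia.
by rewrite mulnC mul_bin_left mulnC add0n.
Qed.

Lemma E2 u v w m n :
  \sum_(i < m.+1) ('C(m, i) * (m + n - i))%N%:R *: prod (m + n - i).-1 (prod i u v) w
  = m%:R *: Rf u v w m.-1 n + n%:R *: Rf u v w m n.-1.
Proof.
rewrite RmS RnS -big_split /=; apply: eq_bigr => i _.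
have hi := ltn_ord i.
by rewrite -scalerDl -natrD -mulnDr; have -> : (m + n - i = m - i + n)%N by lia.
Qed.

Lemma Rf_Dv u v w m n : Rf u (D v) w m n = - (n%:R *: Rf u v w m n.-1).
Proof.
have -> : Rf u (D v) w m n =
  - (\sum_(i < m.+1) ('C(m, i) * (m + n - i))%N%:R *: prod (m + n - i).-1 (prod i u v) w)
  + \sum_(i < m.+1) ('C(m, i) * i)%N%:R *: prod (m + n - i) (prod i.-1 u v) w.
  rewrite /Rf -sumrN -big_split /=; apply: eq_bigr => i _.
  rewrite hDr' plD plZ hDp scalerDr scalerN !scalerA -!natrM.
  by [].
by rewrite E2 SLm -RmS opprD addrAC addNr add0r.
Qed.

Lemma CF_Dv u v w : CF u v w -> CF u (D v) w.
Proof. by move=> H m n; rewrite Lf_Dv Rf_Dv H. Qed.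

Lemma Lf_Dw u v w m n : Lf u v (D w) m n =
  D (Lf u v w m n) + m%:R *: Lf u v w m.-1 n + n%:R *: Lf u v w m n.-1.
Proof.
rewrite /Lf !hDr' !prD !prZ !hDr' (linB hD) (linZ hD).
by rewrite alg2.
Qed.

Lemma Rf_Dw u v w m n : Rf u v (D w) m n =
  D (Rf u v w m n) + m%:R *: Rf u v w m.-1 n + n%:R *: Rf u v w m n.-1.
Proof.
rewrite -addrA -E2 /Rf (lin_sum hD) -big_split /=; apply: eq_bigr => i _.
by rewrite hDr' scalerDr (linZ hD) scalerA -natrM.
Qed.

Lemma CF_Dw u v w : CF u v w -> CF u v (D w).
Proof. by move=> H m n; rewrite Lf_Dw Rf_Dw !H. Qed.

Lemma CF_add1 u1 u2 v w : CF u1 v w -> CF u2 v w -> CF (u1 + u2) v w.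
Proof.
move=> H1 H2 m n.
have -> : Lf (u1 + u2) v w m n = Lf u1 v w m n + Lf u2 v w m n.
  by rewrite /Lf !plD prD alg3.
rewrite H1 H2 /Rf -big_split /=; apply: eq_bigr => i _.
by rewrite plD plD scalerDr.
Qed.

Lemma CF_add2 u v1 v2 w : CF u v1 w -> CF u v2 w -> CF u (v1 + v2) w.
Proof.
move=> H1 H2 m n.
have -> : Lf u (v1 + v2) w m n = Lf u v1 w m n + Lf u v2 w m n.
  by rewrite /Lf !plD prD alg3.
rewrite H1 H2 /Rf -big_split /=; apply: eq_bigr => i _.
by rewrite prD plD scalerDr.
Qed.

Lemma CF_add3 u v w1 w2 : CF u v w1 -> CF u v w2 -> CF u v (w1 + w2).
Proof.
move=> H1 H2 m n.
have -> : Lf u v (w1 + w2) m n = Lf u v w1 m n + Lf u v w2 m n.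
  by rewrite /Lf !prD alg3.
rewrite H1 H2 /Rf -big_split /=; apply: eq_bigr => i _.
by rewrite prD scalerDr.
Qed.

End AbstractCF.


Section AbstractB.
Variable C : numFieldType.
Variable U : lmodType C.
Variable prod : nat -> U -> U -> U.
Variable e : C.
Variables u v w : U.

Definition BL k m n := \sum_(i < k.+1) ((-1) ^+ i * ('C(k, i))%:R) *:
            (prod (m + k - i)%N u (prod (n + i)%N v w)
             - e *: ((-1) ^+ k *: prod (n + k - i)%N v (prod (m + i)%N u w))).
Definition BR k m n :=
  \sum_(i < m.+1) ('C(m, i))%:R *: prod (m + n - i)%N (prod (k + i)%N u v) w.

Definition SX k m n := \sum_(i < k.+1) ((-1) ^+ i * ('C(k, i))%:R) *:
   prod (m + k - i)%N u (prod (n + i)%N v w).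
Definition SY k m n := \sum_(i < k.+1) ((-1) ^+ i * ('C(k, i))%:R) *:
   prod (n + k - i)%N v (prod (m + i)%N u w).

Lemma BL_split k m n : BL k m n = SX k m n - (e * (-1) ^+ k) *: SY k m n.
Proof.
rewrite /BL /SX /SY scaler_sumr -sumrB; apply: eq_bigr => i _.
by rewrite scalerBr !scalerA [e * _ * _]mulrC !mulrA.
Qed.

Lemma PL (h : nat -> U) k :
  \sum_(i < k.+2) ((-1) ^+ i * ('C(k.+1, i))%:R) *: h i
  = \sum_(i < k.+1) ((-1) ^+ i * ('C(k, i))%:R) *: h i
    - \sum_(i < k.+1) ((-1) ^+ i * ('C(k, i))%:R) *: h i.+1.
Proof.
rewrite big_ord_recl [X in X - _]big_ord_recl /= !bin0.
have -> : \sum_(i < k.+1) ((-1) ^+ (lift ord0 i) * ('C(k.+1, lift ord0 i))%:R) *: h (lift ord0 i)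
  = \sum_(i < k.+1) ((-1) ^+ i.+1 * ('C(k, i.+1))%:R) *: h i.+1
    - \sum_(i < k.+1) ((-1) ^+ i * ('C(k, i))%:R) *: h i.+1.
  rewrite -sumrB; apply: eq_bigr => i _ /=.
  by rewrite /bump /= binS natrD mulrDr scalerDl exprS mulN1r add1n [in X in _ + X]mulNr scaleNr.
rewrite addrA; congr (_ + _ - _).
rewrite big_ord_recr /= bin_small // mulr0 scale0r addr0.
by apply: eq_bigr => i _; rewrite /bump /= add1n.
Qed.

Lemma SX_rec k m n : SX k.+1 m n = SX k m.+1 n - SX k m n.+1.
Proof.
rewrite /SX.
have := PL (fun i => prod (m + k.+1 - i) u (prod (n + i) v w)) k; rewrite /= => ->.
congr (_ - _); apply: eq_bigr => i _; congr (_ *: _).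
- by rewrite addSnnS.
- by rewrite !addnS subSS addSn.
Qed.

Lemma SY_rec k m n : SY k.+1 m n = SY k m n.+1 - SY k m.+1 n.
Proof.
rewrite /SY.
have := PL (fun i => prod (n + k.+1 - i) v (prod (m + i) u w)) k; rewrite /= => ->.
congr (_ - _); apply: eq_bigr => i _; congr (_ *: _).
- by rewrite addSnnS.
- by rewrite !addnS subSS addSn.
Qed.

Lemma BL_rec k m n : BL k.+1 m n = BL k m.+1 n - BL k m n.+1.
Proof.
by rewrite !BL_split SX_rec SY_rec exprS mulN1r mulrN alg4.
Qed.

Lemma BR_rec k m n : BR k.+1 m n = BR k m.+1 n - BR k m n.+1.
Proof.
pose G j := prod (m + n - j)%N (prod (k + j.+1)%N u v) w.
pose A0 := prod (m + n.+1)%N (prod k u v) w.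
have E1 : BR k m.+1 n = A0 + \sum_(j < m.+1) ('C(m, j.+1))%:R *: G j
                       + \sum_(j < m.+1) ('C(m, j))%:R *: G j.
  rewrite /BR big_ord_recl /= bin0 scale1r addn0 subn0 addSnnS -addrA -big_split /=.
  congr (_ + _); apply: eq_bigr => j _.
  rewrite /bump /= add1n binS natrD scalerDl /G.
  by have -> : (m + n.+1 - j.+1 = m + n - j)%N by lia.
have E2 : BR k m n.+1 = A0 + \sum_(j < m.+1) ('C(m, j.+1))%:R *: G j.
  rewrite /BR big_ord_recl /= bin0 scale1r addn0 subn0; congr (_ + _).
  rewrite [RHS]big_ord_recr /= bin_small // scale0r addr0.
  apply: eq_bigr => j _; rewrite /bump /= add1n /G.
  by have -> : (m + n.+1 - j.+1 = m + n - j)%N by lia.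
rewrite E1 E2 addrAC subrr add0r /BR; apply: eq_bigr => j _.
by rewrite /G addSnnS.
Qed.

Lemma BorchCF : (forall m n, Lf prod e u v w m n = Rf prod u v w m n) ->
  forall k m n, BL k m n = BR k m n.
Proof.
move=> H; elim=> [|k IH] m n.
  rewrite /BL /BR big_ord1 /= expr0 mul1r bin0 !scale1r !addn0 !subn0.
  exact: H.
by rewrite BL_rec BR_rec !IH.
Qed.

End AbstractB.


Section Homog.
Variables (C : pzRingType) (V0 V1 : lmodType C).
Lemma homog0 b : homog b (0 : V0 * V1). Proof. by case: b. Qed.
Lemma homogD b (x y : V0 * V1) : homog b x -> homog b y -> homog b (x + y).
Proof. by case: b; rewrite /homog /= => -> ->; rewrite addr0. Qed.
Lemma homogZ b a (x : V0 * V1) : homog b x -> homog b (a *: x).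
Proof. by case: b; rewrite /homog /= => ->; rewrite scaler0. Qed.
Lemma homog_sum b n (g : 'I_n -> V0 * V1) : (forall i, homog b (g i)) ->
  homog b (\sum_(i < n) g i).
Proof. move=> h; apply: big_ind => //; [exact: homog0 | exact: homogD]. Qed.
End Homog.

Section Concrete.
Variables (C : numFieldType) (S0 S1 : lmodType C).
Local Notation S := (S0 * S1)%type.
Local Notation U := (CD S0 * CD S1)%type.
Local Notation DD := (@Dop C S0 S1).

Lemma coefS_ext (A B : U) : (forall k, coefS A k = coefS B k) -> A = B.
Proof.
case: A B => [a1 a2] [b1 b2] H; congr pair; apply: CD_ext => k.
  exact: (congr1 fst (H k)).
exact: (congr1 snd (H k)).
Qed.
Lemma coefS_lin k a (A B : U) : coefS (a *: A + B) k = a *: coefS A k + coefS B k.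
Proof. by []. Qed.
Lemma coefS_add k (A B : U) : coefS (A + B) k = coefS A k + coefS B k.
Proof. by []. Qed.
Lemma coefS_islin k : islin (fun A : U => coefS A k).
Proof. by move=> a x y; rewrite coefS_lin. Qed.
Lemma coefS0 k : coefS (0 : U) k = 0. Proof. by []. Qed.
Lemma coefS_bound (A : U) k : (boundS A <= k)%N -> coefS A k = 0.
Proof.
rewrite /boundS geq_max => /andP[h1 h2]; rewrite /coefS /CDcoef.
move: h1 h2; rewrite /CDbound.
case: (cid (proj2_sig A.1)) => N1 /= H1; case: (cid (proj2_sig A.2)) => N2 /= H2 h1 h2.
by rewrite H1 ?H2.
Qed.
Lemma coefS_D (A : U) k : coefS (DD A) k = if k is k'.+1 then coefS A k' else 0.
Proof. by case: k. Qed.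
Lemma coefS_emb (s : S) k : coefS (embS s) k = if k is 0 then s else 0.
Proof. by case: s => ? ?; case: k. Qed.

Lemma Dop_lin : islin DD.
Proof.
move=> a x y; apply: coefS_ext => k; rewrite coefS_lin !coefS_D.
by case: k => [|k]; rewrite ?coefS_lin // scaler0 addr0.
Qed.
Lemma iter_lin k : islin (iter k DD). Proof. exact: islin_iter Dop_lin k. Qed.

Lemma coefS_iter (A : U) j k :
  coefS (iter j DD A) k = if (j <= k)%N then coefS A (k - j) else 0.
Proof.
elim: j k => [|j IH] k /=; first by rewrite subn0.
by rewrite coefS_D; case: k => [|k] //=; rewrite IH subSS.
Qed.

Lemma embS_lin : islin (@embS C S0 S1).
Proof.
move=> a x y; apply: coefS_ext => k; rewrite coefS_lin !coefS_emb.
by case: k => [|k] //; rewrite scaler0 addr0.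
Qed.
Lemma embS_inj (x y : S) : embS x = embS y -> x = y.
Proof. by move/(congr1 (fun A : U => coefS A 0%N)); rewrite !coefS_emb. Qed.
Lemma embS0 : embS (0 : S) = 0. Proof. exact: lin0 embS_lin. Qed.

Lemma CDshift0 (V : lmodType C) : CDshift (0 : CD V) = 0.
Proof. by apply: CD_ext => -[]. Qed.
Lemma CDemb0 (V : lmodType C) : CDemb (0 : V) = 0.
Proof. by apply: CD_ext => -[]. Qed.

Lemma homog_D b (A : U) : homog b A -> homog b (DD A).
Proof. by case: b; rewrite /homog /Dop /= => ->; rewrite CDshift0. Qed.
Lemma homog_iter b (A : U) k : homog b A -> homog b (iter k DD A).
Proof. by move=> h; elim: k => //= k IH; apply: homog_D. Qed.
Lemma homog_coef b (A : U) k : homog b A -> homog b (coefS A k).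
Proof. by case: b; rewrite /homog /coefS /= => ->. Qed.
Lemma homog_emb b (s : S) : homog b (embS s) <-> homog b s.
Proof.
split; case: b; rewrite /homog /embS /=.
- by move/(congr1 (fun f => sval f 0%N)).
- by move/(congr1 (fun f => sval f 0%N)).
- by move=> ->; rewrite CDemb0.
- by move=> ->; rewrite CDemb0.
Qed.

Lemma finsupp_tl (V : nmodType) (f : nat -> V) : finsupp f -> finsupp (fun k => f k.+1).
Proof. by case=> N hN; exists N => k hk; apply: hN; apply: leqW. Qed.
Definition CDtl (V : lmodType C) (f : CD V) : CD V :=
  exist _ _ (finsupp_tl (proj2_sig f)).
Definition tlS (A : U) : U := (CDtl A.1, CDtl A.2).
Lemma coefS_tl (A : U) k : coefS (tlS A) k = coefS A k.+1. Proof. by []. Qed.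
Lemma decomp (A : U) : A = embS (coefS A 0) + DD (tlS A).
Proof. by apply: coefS_ext => k; rewrite coefS_add coefS_emb coefS_D; case: k => [|k]; rewrite ?addr0 ?add0r. Qed.
Lemma homog_tl b (A : U) : homog b A -> homog b (tlS A).
Proof.
have h0 (V : lmodType C) : CDtl (0 : CD V) = 0 by apply: CD_ext.
by case: b; rewrite /homog /tlS /= => ->; rewrite h0.
Qed.

Lemma homog_ind b (P : U -> Prop) :
  (forall a, homog b a -> P (embS a)) ->
  (forall X Y, P X -> P Y -> P (X + Y)) ->
  (forall X, P X -> P (DD X)) ->
  forall A, homog b A -> P A.
Proof.
move=> Pe Pa PD.
suff H : forall N A, homog b A -> (forall i, (N <= i)%N -> coefS A i = 0) -> P A.
  by move=> A hA; apply: (H (boundS A)) => // i; apply: coefS_bound.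
elim=> [|N IH] A hA hv.
  have -> : A = embS 0.
    by apply: coefS_ext => k; rewrite coefS_emb hv //; case: k.
  by apply: Pe; apply: homog0.
rewrite (decomp A); apply: Pa.
  by apply: Pe; apply: homog_coef.
by apply: PD; apply: IH; [apply: homog_tl | move=> i hi; rewrite coefS_tl; apply: hv].
Qed.

End Concrete.


Section ExtProd.
Variables (C : numFieldType) (S0 S1 : lmodType C).
Local Notation S := (S0 * S1)%type.
Local Notation U := (CD S0 * CD S1)%type.
Local Notation DD := (@Dop C S0 S1).
Variable F : nat -> S -> S -> U.
Hypothesis hF1 : forall n z, islin (fun x => F n x z).
Hypothesis hF2 : forall n z, islin (F n z).

Definition Pg n i j (u v : S) : U :=
  (-1) ^+ i *: \sum_(l < j.+1)
       (('C(j, l) * n ^_ (i + l))%N%:R : C) *: iter (j - l) DD (F (n - i - l)%N u v).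

Lemma ext_prodE n (A B : U) : ext_prod F n A B =
  \sum_(i < boundS A) \sum_(j < boundS B) Pg n i j (coefS A i) (coefS B j).
Proof. by []. Qed.

Lemma Pg_lin1 n i j z : islin (fun x => Pg n i j x z).
Proof.
rewrite /Pg; apply: islin_scale; apply: islin_sum => l; apply: islin_scale.
by apply: (islin_comp (f := iter (j - l) DD) (g := fun x => F (n - i - l)%N x z)); [apply: iter_lin | apply: hF1].
Qed.
Lemma Pg_lin2 n i j z : islin (Pg n i j z).
Proof.
rewrite /Pg; apply: islin_scale; apply: islin_sum => l; apply: islin_scale.
by apply: (islin_comp (f := iter (j - l) DD) (g := F (n - i - l)%N z)); [apply: iter_lin | apply: hF2].
Qed.
Lemma Pg0l n i j z : Pg n i j 0 z = 0. Proof. exact: (lin0 (Pg_lin1 n i j z)). Qed.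
Lemma Pg0r n i j z : Pg n i j z 0 = 0. Proof. exact: (lin0 (Pg_lin2 n i j z)). Qed.

Definition cvan (A : U) N := forall i, (N <= i)%N -> coefS A i = 0.

Lemma EP_gen n (A B : U) N M : cvan A N -> cvan B M ->
  ext_prod F n A B = \sum_(i < N) \sum_(j < M) Pg n i j (coefS A i) (coefS B j).
Proof.
move=> hA hB.
have HA i : (minn N (boundS A) <= i)%N -> coefS A i = 0.
  by rewrite geq_min => /orP[]; [apply: hA | apply: coefS_bound].
have HB j : (minn M (boundS B) <= j)%N -> coefS B j = 0.
  by rewrite geq_min => /orP[]; [apply: hB | apply: coefS_bound].
rewrite ext_prodE.
transitivity (\sum_(i < boundS A) \sum_(j < M) Pg n i j (coefS A i) (coefS B j)).
  apply: eq_bigr => i _.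
  rewrite (sum_tr (g := fun j => Pg n i j (coefS A i) (coefS B j)) (K := minn M (boundS B))) ?geq_minr //; last by move=> j hj; rewrite HB // Pg0r.
  rewrite [RHS](sum_tr (g := fun j => Pg n i j (coefS A i) (coefS B j)) (K := minn M (boundS B))) ?geq_minl //.
  by move=> j hj; rewrite HB // Pg0r.
have hg : forall i, (minn N (boundS A) <= i)%N ->
   (fun i => \sum_(j < M) Pg n i j (coefS A i) (coefS B j)) i = 0.
  by move=> i hi /=; rewrite HA // big1 // => j _; rewrite Pg0l.
rewrite (sum_tr (g := fun i => \sum_(j < M) Pg n i j (coefS A i) (coefS B j)) (K := minn N (boundS A))) ?geq_minr //.
by rewrite [RHS](sum_tr (g := fun i => \sum_(j < M) Pg n i j (coefS A i) (coefS B j)) (K := minn N (boundS A))) ?geq_minl.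
Qed.

Lemma cvan_bound (A : U) : cvan A (boundS A).
Proof. by move=> i; apply: coefS_bound. Qed.

Lemma EP_emb n (u v : S) : ext_prod F n (embS u) (embS v) = F n u v.
Proof.
rewrite (@EP_gen n _ _ 1 1); last 2 first.
- by move=> [|i] //; rewrite coefS_emb.
- by move=> [|i] //; rewrite coefS_emb.
rewrite !big_ord1 !coefS_emb /Pg big_ord1 /= expr0 scale1r.
by rewrite ffactn0 muln1 bin0 scale1r !subn0.
Qed.

Lemma EP_lin1 n z : islin (fun x => ext_prod F n x z).
Proof.
move=> a x y /=.
pose N := maxn (boundS x) (boundS y).
have hx : cvan x N by move=> i hi; apply: coefS_bound; apply: leq_trans hi; apply: leq_maxl.
have hy : cvan y N by move=> i hi; apply: coefS_bound; apply: leq_trans hi; apply: leq_maxr.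
have hxy : cvan (a *: x + y) N by move=> i hi; rewrite coefS_lin hx // hy // scaler0 addr0.
rewrite !(@EP_gen n _ _ N (boundS z)) //; try exact: cvan_bound.
rewrite scaler_sumr -big_split /=; apply: eq_bigr => i _.
rewrite scaler_sumr -big_split /=; apply: eq_bigr => j _.
by rewrite coefS_lin Pg_lin1.
Qed.

Lemma EP_lin2 n z : islin (ext_prod F n z).
Proof.
move=> a x y /=.
pose N := maxn (boundS x) (boundS y).
have hx : cvan x N by move=> i hi; apply: coefS_bound; apply: leq_trans hi; apply: leq_maxl.
have hy : cvan y N by move=> i hi; apply: coefS_bound; apply: leq_trans hi; apply: leq_maxr.
have hxy : cvan (a *: x + y) N by move=> i hi; rewrite coefS_lin hx // hy // scaler0 addr0.
rewrite !(@EP_gen n _ _ (boundS z) N) //; try exact: cvan_bound.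
rewrite scaler_sumr -big_split /=; apply: eq_bigr => i _.
rewrite scaler_sumr -big_split /=; apply: eq_bigr => j _.
by rewrite coefS_lin Pg_lin2.
Qed.

Lemma G1 n i j u v : Pg n i.+1 j u v = - (n%:R *: Pg n.-1 i j u v).
Proof.
rewrite /Pg exprS mulN1r scaleNr; congr (- _).
rewrite scalerA mulrC -scalerA; congr (_ *: _).
rewrite scaler_sumr; apply: eq_bigr => l _; rewrite scalerA -natrM.
have -> : (n - i.+1 - l = n.-1 - i - l)%N by lia.
by rewrite addSn ffactnS mulnCA.
Qed.

Lemma G2 n i j u v : DD (Pg n i j u v) = Pg n i.+1 j u v + Pg n i j.+1 u v.
Proof.
pose T l := F (n - i - l)%N u v.
pose Sm := \sum_(l < j.+1) (('C(j, l) * n ^_ (i + l))%N%:R : C) *: iter (j - l) DD (T l).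
pose B := \sum_(l < j.+1) (('C(j, l) * n ^_ (i + l.+1))%N%:R : C) *: iter (j - l) DD (T l.+1).
have EA : Pg n i j.+1 u v = (-1) ^+ i *: (DD Sm + B).
  rewrite /Pg; congr (_ *: _).
  rewrite big_ord_recl /= subn0 addn0 !bin0 mul1n.
  have -> : \sum_(l < j.+1) (('C(j.+1, lift ord0 l) * n ^_ (i + lift ord0 l))%N%:R : C) *:
      iter (j.+1 - lift ord0 l) DD (F (n - i - lift ord0 l)%N u v)
    = \sum_(l < j.+1) (('C(j, l.+1) * n ^_ (i + l.+1))%N%:R : C) *: iter (j - l) DD (T l.+1) + B.
    rewrite -big_split /=; apply: eq_bigr => l _.
    by rewrite /bump /= add1n binS mulnDl natrD scalerDl subSS.
  rewrite addrA; congr (_ + _).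
  rewrite /Sm (lin_sum (@Dop_lin C S0 S1)) [RHS]big_ord_recl /= (linZ (@Dop_lin C S0 S1)) subn0 addn0 bin0 mul1n.
  congr (_ + _).
    by rewrite /T subn0.
  rewrite big_ord_recr /= bin_small // mul0n scale0r addr0.
  apply: eq_bigr => l _; rewrite /bump /= add1n (linZ (@Dop_lin C S0 S1)); congr (_ *: _).
  have hl := ltn_ord l.
  by have -> : (j - l = (j - l.+1).+1)%N by lia.
have EB : Pg n i.+1 j u v = - ((-1) ^+ i *: B).
  rewrite /Pg exprS mulN1r scaleNr; congr (- (_ *: _)).
  apply: eq_bigr => l _; rewrite addSnnS.
  by have -> : (n - i.+1 - l = n - i - l.+1)%N by lia.
by rewrite EA EB /Pg (linZ (@Dop_lin C S0 S1)) -/Sm scalerDr addrCA addNr addr0.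
Qed.

Lemma EP_DA n (A B : U) : ext_prod F n (DD A) B =
  \sum_(i < boundS A) \sum_(j < boundS B) Pg n i.+1 j (coefS A i) (coefS B j).
Proof.
rewrite (@EP_gen n _ _ (boundS A).+1 (boundS B)); last 2 first.
- by move=> [|i] // hi; rewrite coefS_D coefS_bound.
- exact: cvan_bound.
rewrite big_ord_recl /= big1 ?add0r; last by move=> j _; rewrite coefS_D Pg0l.
by apply: eq_bigr => i _; rewrite coefS_D.
Qed.

Lemma EP_DB n (A B : U) : ext_prod F n A (DD B) =
  \sum_(i < boundS A) \sum_(j < boundS B) Pg n i j.+1 (coefS A i) (coefS B j).
Proof.
rewrite (@EP_gen n _ _ (boundS A) (boundS B).+1); last 2 first.
- exact: cvan_bound.
- by move=> [|i] // hi; rewrite coefS_D coefS_bound.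
apply: eq_bigr => i _.
rewrite big_ord_recl /= coefS_D Pg0r add0r.
by apply: eq_bigr => j _; rewrite coefS_D.
Qed.

Lemma EP_ax6 n (A B : U) : ext_prod F n (DD A) B = - (n%:R *: ext_prod F n.-1 A B).
Proof.
rewrite EP_DA ext_prodE scaler_sumr -sumrN; apply: eq_bigr => i _.
by rewrite scaler_sumr -sumrN; apply: eq_bigr => j _; rewrite G1.
Qed.

Lemma EP_ax7 n (A B : U) :
  DD (ext_prod F n A B) = ext_prod F n (DD A) B + ext_prod F n A (DD B).
Proof.
rewrite EP_DA EP_DB ext_prodE (lin_sum (@Dop_lin C S0 S1)) -big_split; apply: eq_bigr => i _ /=.
by rewrite (lin_sum (@Dop_lin C S0 S1)) -big_split; apply: eq_bigr => j _ /=; rewrite G2.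
Qed.

Lemma EP_homog bu bv (A B : U) n : homog bu A -> homog bv B ->
  (forall n bu bv (u v : S), homog bu u -> homog bv v -> homog (bu (+) bv) (F n u v)) ->
  homog (bu (+) bv) (ext_prod F n A B).
Proof.
move=> hA hB hF; rewrite ext_prodE; apply: homog_sum => i; apply: homog_sum => j.
rewrite /Pg; apply: homogZ; apply: homog_sum => l; apply: homogZ; apply: homog_iter.
by apply: hF; apply: homog_coef.
Qed.

Lemma EP_van (hF0 : forall n, (1 <= n)%N -> forall u v, F n u v = 0) (A B : U) :
  exists N, forall n, (N <= n)%N -> ext_prod F n A B = 0.
Proof.
exists (boundS A + boundS B)%N => n hn; rewrite ext_prodE.
apply: big1 => i _; apply: big1 => j _; rewrite /Pg big1 ?scaler0 // => l _.
have hi := ltn_ord i; have hj := ltn_ord j; have hl := ltn_ord l.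
by rewrite hF0 ?(lin0 (@iter_lin C S0 S1 _)) ?scaler0 //; lia.
Qed.

End ExtProd.


Section Back.
Variables (C : numFieldType) (S0 S1 : lmodType C).
Local Notation S := (S0 * S1)%type.
Local Notation U := (CD S0 * CD S1)%type.
Local Notation DD := (@Dop C S0 S1).
Variable F : nat -> S -> S -> U.
Hypothesis hform : is_formula F.
Hypothesis hF0 : forall n, (1 <= n)%N -> forall u v, F n u v = 0.
Variable br : S -> S -> S.
Hypothesis hL : is_LieSuperalgebra br.
Hypothesis hbr : forall u v, F 0 u v = embS (br u v).

Local Notation prod := (ext_prod F).

Lemma hF1 n z : islin (fun x => F n x z).
Proof. by case: hform => h1 _ a x y; apply: h1. Qed.
Lemma hF2 n z : islin (F n z).
Proof. by case: hform => _ [h2 _] a x y; apply: h2. Qed.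
Lemma hFh n bu bv (u v : S) : homog bu u -> homog bv v -> homog (bu (+) bv) (F n u v).
Proof. by case: hform => _ [_ [h3 _]]; apply: h3. Qed.

Lemma bD : islin DD. Proof. exact: Dop_lin. Qed.
Lemma bpl n z : islin (fun x => prod n x z). Proof. exact: (EP_lin1 hF1 hF2). Qed.
Lemma bpr n z : islin (prod n z). Proof. exact: (EP_lin2 hF1 hF2). Qed.
Lemma bDp (u v : U) n : prod n (DD u) v = - (n%:R *: prod n.-1 u v).
Proof. exact: (EP_ax6 hF1 hF2). Qed.
Lemma bDd (u v : U) n : DD (prod n u v) = prod n (DD u) v + prod n u (DD v).
Proof. exact: (EP_ax7 hF1 hF2). Qed.
Lemma bvan (u v : U) : exists N, forall n, (N <= n)%N -> prod n u v = 0.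
Proof. exact: EP_van. Qed.

Lemma brl z : islin (fun x => br x z).
Proof. by case: hL => h1 _ a x y; apply: h1. Qed.
Lemma brr z : islin (br z).
Proof. by case: hL => _ [h2 _] a x y; apply: h2. Qed.

Lemma PE p (x y : S) : prod p (embS x) (embS y) = embS (if p == 0%N then br x y else 0).
Proof. by rewrite (EP_emb hF1 hF2); case: p => [|p] /=; [exact: hbr | rewrite hF0 // embS0]. Qed.

Lemma SKL_base bu bv (a b : S) : homog bu a -> homog bv b ->
  SKL DD prod (eps C bu bv) (embS a) (embS b).
Proof.
move=> ha hb; exists 1%N => n M; case: M => [//|M] _.
rewrite /Sk big_ord_recl /= big1 ?addr0; last first.
  by move=> k _; rewrite PE addnS /= embS0 (lin0 (@iter_lin C S0 S1 _)) (lin0 bD) scaler0.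
rewrite !PE addn0; case: n => [|n] /=; last by rewrite embS0 !scaler0 oppr0.
rewrite expr0 mul1r invr1 scale1r.
case: hL => _ [_ [_ [hsk _]]].
by rewrite (hsk bu bv a b ha hb) (linN (@embS_lin C S0 S1)) (linZ (@embS_lin C S0 S1)).
Qed.

Lemma SKL_all bu bv (A B : U) : homog bu A -> homog bv B ->
  SKL DD prod (eps C bu bv) A B.
Proof.
have hvan := bvan.
move=> hA; move: A hA B.
have H1 : forall A, homog bu A -> forall b, homog bv b -> SKL DD prod (eps C bu bv) A (embS b).
  apply: homog_ind.
  - by move=> a ha b hb; apply: SKL_base.
  - by move=> X Y hX hY b hb; apply: (SKL_add1 bD bpl bpr); [apply: hX | apply: hY].
  - by move=> X hX b hb; apply: (SKL_Du bD bDp bDd hvan); apply: hX.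
move=> A hA; apply: homog_ind.
- by move=> b hb; apply: H1.
- by move=> X Y hX hY; apply: (SKL_add2 bD bpl bpr).
- by move=> X hX; apply: (SKL_Dv bD bDp bDd hvan).
Qed.

Lemma CF_base bu bv bw (a b c : S) : homog bu a -> homog bv b -> homog bw c ->
  CF prod (eps C bu bv) (embS a) (embS b) (embS c).
Proof.
move=> ha hb hc m n; rewrite /Lf /Rf !PE.
have z0 := lin0 (brl c); have z1 := lin0 (brr a); have z2 := lin0 (brr b).
case: m => [|m]; case: n => [|n] /=.
- rewrite big_ord1 /= PE /= bin0 scale1r.
  case: hL => _ [_ [_ [_ hJ]]].
  by rewrite (hJ bu bv bw a b c ha hb hc) -(linZ (@embS_lin C S0 S1)) -(linB (@embS_lin C S0 S1)) addrK PE.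
all: rewrite ?z1 ?z2 !embS0 ?scaler0 ?subr0; symmetry; apply: big1 => -[[|i] hi] _ /=.
all: by rewrite !PE /= ?z0 ?if_same ?embS0 ?scaler0.
Qed.

Lemma CF_all bu bv bw : forall (A B W : U), homog bu A -> homog bv B -> homog bw W ->
  CF prod (eps C bu bv) A B W.
Proof.
have H1 : forall A, homog bu A -> forall b c, homog bv b -> homog bw c ->
    CF prod (eps C bu bv) A (embS b) (embS c).
  apply: homog_ind.
  - by move=> a ha b c hb hc; apply: CF_base hb hc.
  - by move=> X Y hX hY b c hb hc; apply: (CF_add1 bpl bpr); [apply: hX | apply: hY].
  - by move=> X hX b c hb hc; apply: (CF_Du bpl bpr bDp); apply: hX.
have H2 : forall A, homog bu A -> forall B, homog bv B -> forall c, homog bw c ->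
    CF prod (eps C bu bv) A B (embS c).
  move=> A hA; apply: homog_ind.
  - by move=> b hb c hc; apply: H1.
  - by move=> X Y hX hY c hc; apply: (CF_add2 bpl bpr); [apply: hX | apply: hY].
  - by move=> X hX c hc; apply: (CF_Dv bpl bpr bDp bDd); apply: hX.
move=> A B W hA hB; move: W; apply: homog_ind.
- by move=> c hc; apply: H2.
- by move=> X Y hX hY; apply: (CF_add3 bpr).
- by move=> X hX; apply: (CF_Dw bD bpr bDp bDd).
Qed.

Theorem backward : is_VLSA DD prod.
Proof.
split; first exact: bD.
split; first by move=> b x; apply: homog_D.
split; first by move=> n a x y z; apply: bpl.
split; first by move=> n a x y z; apply: bpr.
split; first by move=> bu bv u v _ _; apply: bvan.
split; first by move=> bu bv u v n hu hv; apply: EP_homog => //; apply: hFh.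
split; first by move=> bu bv u v n _ _; apply: bDp.
split; first by move=> bu bv u v n _ _; apply: bDd.
split.
  move=> bu bv u v n M hu hv hM.
  exact: (SK_of_SKL bD (SKL_all hu hv)).
move=> bu bv bw u v w k m n hu hv hw.
exact: (BorchCF (CF_all hu hv hw)).
Qed.

End Back.


Section Fwd.
Variables (C : numFieldType) (S0 S1 : lmodType C).
Local Notation S := (S0 * S1)%type.
Local Notation U := (CD S0 * CD S1)%type.
Local Notation DD := (@Dop C S0 S1).
Variable F : nat -> S -> S -> U.
Hypothesis hform : is_formula F.
Hypothesis hemb : forall n (u v : S), exists s : S, F n u v = embS s.
Hypothesis hV : is_VLSA DD (ext_prod F).

Local Notation prod := (ext_prod F).

Let f1 := hF1 hform.
Let f2 := hF2 hform.

Lemma coefF n (u v : S) p : coefS (F n u v) p = if p == 0%N then coefS (F n u v) 0 else 0.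
Proof. by have [s ->] := hemb n u v; rewrite !coefS_emb; case: p. Qed.

Lemma F_van_homog bu bv (u v : S) m : homog bu u -> homog bv v -> (1 <= m)%N -> F m v u = 0.
Proof.
move=> hu hv hm1.
case: hV => _ [_ [_ [_ [hvan [_ [_ [_ [hsk _]]]]]]]].
have hu' := (homog_emb bu u).2 hu; have hv' := (homog_emb bv v).2 hv.
have [N HN] := hvan bv bu (embS v) (embS u) hv' hu'.
case: (leqP N m) => hm; first by rewrite -(EP_emb f1 f2) HN.
have E := hsk bu bv (embS u) (embS v) 0%N N hu' hv' HN.
move/(congr1 (fun A : U => coefS A m)): E.
rewrite (EP_emb f1 f2) coefF; have -> : (m == 0%N) = false by case: m hm1 hm.
rewrite (linN (@coefS_islin C S0 S1 m)) (linZ (@coefS_islin C S0 S1 m)) (lin_sum (@coefS_islin C S0 S1 m)).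
rewrite (bigD1 (Ordinal hm)) //= big1 ?addr0; last first.
  move=> k hk; rewrite (linZ (@coefS_islin C S0 S1 m)) coefS_iter (EP_emb f1 f2) add0n.
  case: leqP => hkm; last by rewrite scaler0.
  rewrite coefF; case: eqP => [h|]; last by rewrite scaler0.
  by exfalso; move: hk => /eqP; apply; apply: val_inj => /=; lia.
rewrite (linZ (@coefS_islin C S0 S1 m)) coefS_iter leqnn subnn (EP_emb f1 f2) add0n.
move/eqP; rewrite eq_sym oppr_eq0 !scaler_eq0 signr_eq0 /= mulf_eq0 signr_eq0 /=.
rewrite invr_eq0 pnatr_eq0 (negbTE (lt0n_neq0 (fact_gt0 m))) /= => /eqP h0.
by have [s hs] := hemb m v u; move: h0; rewrite hs coefS_emb => ->; rewrite embS0.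
Qed.

Lemma split_pair (x : S) : x = (x.1, 0) + (0, x.2).
Proof. by case: x => a b; rewrite /GRing.add /=; congr pair; rewrite ?addr0 ?add0r. Qed.

Lemma F_van m (u v : S) : (1 <= m)%N -> F m v u = 0.
Proof.
move=> hm.
have h1 (x : S0) : homog false ((x, 0) : S) by [].
have h2 (x : S1) : homog true ((0, x) : S) by [].
rewrite (split_pair u) (split_pair v).
have e1 := linD (f1 m ((u.1, 0) + (0, u.2))) (v.1, 0) (0, v.2).
have e2 := linD (f2 m (v.1, 0)) (u.1, 0) (0, u.2).
have e3 := linD (f2 m (0, v.2)) (u.1, 0) (0, u.2).
rewrite /= in e1 e2 e3; rewrite e1 e2 e3.
by rewrite (@F_van_homog false false) // (@F_van_homog true false) // (@F_van_homog false true) // (@F_van_homog true true) // !addr0.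
Qed.

Definition brF (u v : S) : S := coefS (F 0 u v) 0.

Lemma hbrF u v : F 0 u v = embS (brF u v).
Proof. by rewrite /brF; have [s ->] := hemb 0 u v; rewrite coefS_emb. Qed.

Lemma PE0 (x y : S) : prod 0 (embS x) (embS y) = embS (brF x y).
Proof. by rewrite (EP_emb f1 f2) hbrF. Qed.

Lemma forward : (forall n, (1 <= n)%N -> forall u v : S, F n u v = 0) /\
    exists br : S -> S -> S, is_LieSuperalgebra br /\ forall u v : S, F 0%N u v = embS (br u v).
Proof.
split; first by move=> n hn u v; apply: F_van.
exists brF; split; last exact: hbrF.
case: hV => _ [_ [_ [_ [hvan [_ [_ [_ [hsk hB]]]]]]]].
split; first by move=> a x y z; rewrite /brF (f1 0 z) coefS_lin.
split; first by move=> a x y z; rewrite /brF (f2 0 z) coefS_lin.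
split.
  move=> bu bv u v hu hv; apply/(homog_emb _ _).1; rewrite -hbrF.
  by case: hform => _ [_ [h3 _]]; apply: h3.
split.
  move=> bu bv u v hu hv.
  have hu' := (homog_emb bu u).2 hu; have hv' := (homog_emb bv v).2 hv.
  have [N HN] := hvan bv bu (embS v) (embS u) hv' hu'.
  have HN' : forall m, (N.+1 <= m)%N -> prod m (embS v) (embS u) = 0.
    by move=> m hm; apply: HN; apply: ltnW.
  have E := hsk bu bv (embS u) (embS v) 0%N N.+1 hu' hv' HN'.
  move: E; rewrite PE0 big_ord_recl /= big1 ?addr0; last first.
    by move=> k _; rewrite (EP_emb f1 f2) F_van // (lin0 (@iter_lin C S0 S1 _)) (lin0 (@Dop_lin C S0 S1)) scaler0.
  rewrite !addn0 PE0 expr0 mul1r invr1 scale1r -(linZ (@embS_lin C S0 S1)) -(linN (@embS_lin C S0 S1)).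
  exact: embS_inj.
move=> bu bv bw u v w hu hv hw.
have hu' := (homog_emb bu u).2 hu; have hv' := (homog_emb bv v).2 hv.
have hw' := (homog_emb bw w).2 hw.
have := hB bu bv bw (embS u) (embS v) (embS w) 0%N 0%N 0%N hu' hv' hw'.
rewrite !big_ord1 /= expr0 mul1r bin0 !scale1r !PE0.
rewrite -(linZ (@embS_lin C S0 S1)) -(linB (@embS_lin C S0 S1)) => /embS_inj /eqP.
by rewrite subr_eq => /eqP.
Qed.

End Fwd.

Unset Implicit Arguments.
Local Open Scope complex_scope.

Theorem proposition7p6 (R : realType) (S0 S1 : lmodType R[i])
  (F : nat -> S0 * S1 -> S0 * S1 -> CD S0 * CD S1) :
  is_formula F ->
  (forall n (u v : S0 * S1), exists s : S0 * S1, F n u v = embS s) ->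
  (is_VLSA (@Dop _ S0 S1) (ext_prod F) <->
   ((forall n, (1 <= n)%N -> forall u v : S0 * S1, F n u v = 0) /\
    exists br : S0 * S1 -> S0 * S1 -> S0 * S1,
      is_LieSuperalgebra br /\ forall u v : S0 * S1, F 0%N u v = embS (br u v))).
Proof.
move=> hform hemb; split.
  by move=> hV; apply: forward.
by case=> hF0 [br [hL hbr]]; apply: backward hL hbr.
Qed.
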